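(* For any $\epsilon,\gamma>0$ and any graph $\mathcal{G}=(\mathcal{V},\mathcal{E})$ containing a perfect matching, with $V=|\mathcal{V}|$ and $E=|\mathcal{E}|$, there is an algorithm $\mathcal{A}$ that is $\epsilon$-differentially private on $\mathcal{G}$ that on input $w:\mathcal{E}\to\mathbb{R}$ releases, with probability at least $1-\gamma$, a perfect matching of $\mathcal{G}$ whose weight is at most $(V/\epsilon)\ln(E/\gamma)$ larger than the minimum weight of a perfect matching of $(\mathcal{G},w)$.
   Context: Private edge weight model (with real, possibly negative, weights): for a graph $\mathcal{G}=(\mathcal{V},\mathcal{E})$, a weight function is $w:\mathcal{E}\to\mathbb{R}$. Two weight functions $w,w'$ are neighboring if $\sum_{e\in\mathcal{E}}|w(e)-w'(e)|\le1$. A randomized algorithm $\mathcal{A}$ on weight functions is $\epsilon$-differentially private on $\mathcal{G}$ if for all neighboring $w,w'$ and all sets $S$ of outputs, $\Pr[\mathcal{A}(w)\in S]\le e^{\epsilon}\Pr[\mathcal{A}(w')\in S]$. The weight of a matching is the sum of its edge weights. *)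

(* Defs.v *)
From HB Require Import structures.
From mathcomp Require Import all_boot all_order all_algebra.
From mathcomp Require Import all_classical all_reals all_analysis.
Set Implicit Arguments. Unset Strict Implicit. Unset Printing Implicit Defensive.
Import Order.TTheory GRing.Theory Num.Theory.
Local Open Scope ring_scope.

Definition simple_graph (T Ed : finType) (ends : Ed -> {set T}) : Prop :=
  injective ends /\ forall x : Ed, #|ends x| = 2%N.

Definition perfect_matching (T Ed : finType) (ends : Ed -> {set T})
  (M : {set Ed}) : bool :=
  [forall v : T, #|[set x in M | v \in ends x]| == 1%N].

Definition mweight (R : realType) (Ed : finType) (w : Ed -> R) (M : {set Ed}) : R :=
  \sum_(x in M) w x.

(* A randomized algorithm with outputs in the finite set {set Ed} is given by
   its output distribution on each input w. *)
Definition is_distr (R : realType) (O : finType) (p : {ffun O -> R}) : Prop :=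
  (forall o, 0 <= p o) /\ \sum_(o : O) p o = 1.

Definition Prob (R : realType) (O : finType) (p : {ffun O -> R}) (S : {set O}) : R :=
  \sum_(o in S) p o.

Definition neighboring (R : realType) (Ed : finType) (w w' : Ed -> R) : Prop :=
  \sum_(x : Ed) `|w x - w' x| <= 1.

Definition diff_private (R : realType) (Ed O : finType) (eps : R)
  (A : (Ed -> R) -> {ffun O -> R}) : Prop :=
  forall w w' : Ed -> R, neighboring w w' ->
  forall S : {set O}, Prob (A w) S <= expR eps * Prob (A w') S.

Definition good_output (R : realType) (T Ed : finType) (ends : Ed -> {set T})
  (w : Ed -> R) (b : R) : {set {set Ed}} :=
  [set M | perfect_matching ends M &&
     [forall M' : {set Ed}, perfect_matching ends M' ==> (mweight w M <= mweight w M' + b)]].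

(* Main.v *)
Require Import Defs.
From HB Require Import structures.
From mathcomp Require Import all_boot all_order all_algebra.
From mathcomp Require Import all_classical all_reals all_analysis.
From mathcomp Require Import ring lra.
Import Order.TTheory GRing.Theory Num.Theory.
Local Open Scope ring_scope.

Lemma pm_card (T Ed : finType) (ends : Ed -> {set T}) (hG : simple_graph ends)
  (M : {set Ed}) : perfect_matching ends M -> #|T| = (2 * #|M|)%N.
Proof.
move=> /forallP pm.
have E1 : #|T| = (\sum_(v : T) #|[set x in M | v \in ends x]|)%N.
  rewrite -sum1_card; apply: eq_bigr => v _; by rewrite (eqP (pm v)).
have E2 : forall v, #|[set x in M | v \in ends x]| =
     (\sum_(x in M) (if v \in ends x then 1 else 0))%N.
  move=> v; rewrite -sum1_card -big_mkcondr /=.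
  by apply: eq_bigl => x; rewrite inE.
rewrite E1 (eq_bigr _ (fun v _ => E2 v)) exchange_big /=.
under eq_bigr => x _ do rewrite -big_mkcond /= sum1_card hG.2.
by rewrite sum_nat_const mulnC.
Qed.

Lemma bin_le_exp n m : ('C(n, m) <= n ^ m)%N.
Proof.
apply: (leq_trans (leq_pmulr _ (fact_gt0 m))).
rewrite bin_ffact.
elim: m n => [|m IH] n; first by rewrite ffactn0.
rewrite ffactnS expnS leq_mul2l (leq_trans (IH _)) ?orbT //.
case: m {IH} => [|m]; first by rewrite !expn0.
by rewrite leq_exp2r // leq_pred.
Qed.

Section Main.
Variables (R : realType) (T Ed : finType) (ends : Ed -> {set T}) (e2 : R).
Hypothesis he2 : 0 < e2.

Definition fw (w : Ed -> R) (M : {set Ed}) : R :=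
  if perfect_matching ends M then expR (- (e2 * mweight w M)) else 0.

Definition Zw w := \sum_(M : {set Ed}) fw w M.

Lemma fw_ge0 w M : 0 <= fw w M.
Proof. rewrite /fw; case: ifP => // _; exact: expR_ge0. Qed.

Lemma Zw_gt0 w M0 : perfect_matching ends M0 -> 0 < Zw w.
Proof.
move=> h; rewrite /Zw (bigD1 M0) //=.
apply: ltr_pwDl; first by rewrite /fw h expR_gt0.
by apply: sumr_ge0 => *; exact: fw_ge0.
Qed.

Lemma fw_leZ w M : fw w M <= Zw w.
Proof.
rewrite /Zw (bigD1 M) //= lerDl.
by apply: sumr_ge0 => *; exact: fw_ge0.
Qed.

Lemma mweight_diff (w w' : Ed -> R) (M : {set Ed}) : neighboring w w' -> mweight w' M - mweight w M <= 1.
Proof.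
move=> hn; rewrite /mweight -sumrB.
apply: le_trans (ler_norm _) _.
apply: le_trans (ler_norm_sum _ _ _) _.
apply: le_trans hn.
rewrite [X in _ <= X](bigID (fun x => x \in M)) /=.
rewrite -[X in X <= _]addr0 lerD //.
  by apply: ler_sum => x _; rewrite distrC.
by apply: sumr_ge0.
Qed.
Lemma neighboring_sym (w w' : Ed -> R) : neighboring w w' -> neighboring w' w.
Proof. by rewrite /neighboring => h; under eq_bigr do rewrite distrC. Qed.

Lemma fw_le w w' M : neighboring w w' -> fw w M <= expR e2 * fw w' M.
Proof.
move=> hn; rewrite /fw; case: ifP => _; last by rewrite mulr0.
rewrite -expRD ler_expR.
have h1 := mweight_diff w w' M hn.
have := ler_wpM2l (ltW he2) h1.
lra.
Qed.

Lemma sum_le w w' (S : {set {set Ed}}) : neighboring w w' ->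
  \sum_(M in S) fw w M <= expR e2 * \sum_(M in S) fw w' M.
Proof. by move=> hn; rewrite mulr_sumr; apply: ler_sum => M _; exact: fw_le. Qed.

End Main.

Theorem theoremB6 (R : realType) (T Ed : finType) (ends : Ed -> {set T})
  (hG : simple_graph ends)
  (hpm : exists M : {set Ed}, perfect_matching ends M)
  (eps gamma : R) (heps : 0 < eps) (hgamma : 0 < gamma) :
  exists A : (Ed -> R) -> {ffun {set Ed} -> R},
    (forall w, is_distr (A w)) /\
    diff_private eps A /\
    (forall w : Ed -> R,
       1 - gamma <= Prob (A w)
         (good_output ends w ((#|T|%:R / eps) * ln (#|Ed|%:R / gamma)))).
Proof.
have he2 : 0 < eps / 2 by rewrite divr_gt0.
case: hpm => M0 hM0.
pose F := fw R T Ed ends (eps / 2).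
pose Z := Zw R T Ed ends (eps / 2).
have Zpos : forall w, 0 < Z w by move=> w; exact: (@Zw_gt0 R T Ed ends (eps/2) w M0 hM0).
pose A := fun w => [ffun M => F w M / Z w].
have hdist : forall w, is_distr (A w).
  move=> w; split.
    by move=> M; rewrite ffunE divr_ge0 // ?fw_ge0 // ltW.
  rewrite (eq_bigr (fun M => F w M / Z w)); last by move=> M _; rewrite ffunE.
  rewrite -mulr_suml; change (Z w / Z w = 1).
  by rewrite divff // gt_eqF.
exists A.
have ProbE : forall w S, Prob [ffun M => F w M / Z w] S = (\sum_(M in S) F w M) / Z w.
  by move=> w S; rewrite /Prob mulr_suml; apply: eq_bigr => M _; rewrite ffunE.
split; [|split].
- exact: hdist.
- move=> w w' hn S; rewrite !ProbE.
  have h1 := @sum_le R T Ed ends _ he2 w w' S hn.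
  have h2 : Z w' <= expR (eps/2) * Z w.
    rewrite /Z /Zw mulr_sumr; apply: ler_sum => M _.
    exact: (@fw_le R T Ed ends _ he2 w' w M (@neighboring_sym R Ed w w' hn)).
  rewrite -/(F w) -/(F w') in h1.
  move: h1; set a := \sum_(M in S) F w M; set b := \sum_(M in S) F w' M => h1.
  have hb0 : 0 <= b by apply: sumr_ge0 => M _; exact: fw_ge0.
  set u := b / Z w'.
  have hu : 0 <= u by rewrite divr_ge0 // ltW.
  have hbu : b = u * Z w' by rewrite /u divfK // gt_eqF.
  have hc := expR_gt0 (eps / 2).
  have hZ := Zpos w.
  rewrite {1}[eps](splitr) expRD ler_pdivrMr //.
  rewrite hbu in h1.
  move: (expR (eps/2)) hc h1 h2 => c hc h1 h2.
  have hcu : 0 <= c * u by rewrite mulr_ge0 // ltW.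
  have h3 := ler_wpM2l hcu h2.
  apply: (le_trans h1); apply: (le_trans _ (le_trans h3 _)).
    by rewrite mulrA.
  by rewrite (_ : c * u * (c * Z w) = c * c * u * Z w) //; ring.
- move=> w.
  set b := (#|T|%:R / eps * ln (#|Ed|%:R / gamma)).
  set G := good_output ends w b.
  have hA0 : forall M, 0 <= [ffun M => F w M / Z w] M.
    by move=> M; rewrite ffunE divr_ge0 // ?fw_ge0 // ltW.
  case: (lerP 1 gamma) => hg.
    apply: (@le_trans _ _ 0); first by rewrite subr_le0.
    by apply: sumr_ge0 => M _.
  have hsplit : Prob [ffun M => F w M / Z w] G =
      1 - Prob [ffun M => F w M / Z w] (~: G).
    have tot := (hdist w).2; rewrite (bigID (fun o => o \in G)) /= in tot.
    rewrite -tot /Prob.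
    rewrite [X in _ = _ - X](eq_bigl (fun o => o \notin G)); last by move=> o; rewrite !inE.
    by rewrite addrK.
  rewrite hsplit lerD2l lerN2.
  set c := expR (- (eps / 2 * b)).
  have hc0 : 0 <= c by exact: expR_ge0.
  have hbound : forall M, M \in ~: G ->
      A w M <= (if perfect_matching ends M then c else 0).
    move=> M; rewrite !inE negb_and /A ffunE.
    case hPM: (perfect_matching ends M) => /=; last first.
      by move=> _; rewrite /F /fw hPM mul0r.
    move=> /forallPn [M' hM']; rewrite negb_imply -ltNge in hM'.
    case/andP: hM' => hPM' hlt.
    rewrite ler_pdivrMr //.
    apply: (@le_trans _ _ (F w M' * c)); last first.
      by rewrite mulrC ler_wpM2l // fw_leZ.
    rewrite /F /fw hPM hPM' /c -expRD ler_expR.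
    have := ler_wpM2l (ltW he2) (ltW hlt).
    lra.
  have hle1 : Prob (A w) (~: G) <= \sum_(M in ~: G) (if perfect_matching ends M then c else 0).
    by apply: ler_sum => M hM; exact: hbound.
  case: (posnP #|Ed|) => hE.
    have hw0 : forall M, mweight w M = 0.
      move=> M; rewrite /mweight big_pred0 // => x.
      by have := card0_eq hE x; rewrite !inE.
    have hb0 : b = 0 by rewrite /b hE mul0r ln0 ?mulr0.
    apply: (le_trans hle1); apply: (@le_trans _ _ 0); last exact: ltW.
    rewrite big1 // => M hM; case hP: (perfect_matching ends M) => //.
    move: hM; rewrite /G /good_output !inE hP /= => /forallPn [M' hM'].
    by rewrite !hw0 hb0 addr0 lexx implybT in hM'.
  apply: (le_trans hle1).
  have hle2 : \sum_(M in ~: G) (if perfect_matching ends M then c else 0)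
      <= \sum_(M | perfect_matching ends M) c.
    rewrite [X in _ <= X]big_mkcond /= [X in X <= _]big_mkcond /=.
    apply: ler_sum => M _; case: (M \in ~: G) => //.
    by case: (perfect_matching ends M).
  apply: (le_trans hle2); rewrite sumr_const.
  set N := #|_|.
  set k := #|M0|.
  have hV : #|T| = (2 * k)%N by exact: (@pm_card T Ed ends hG M0 hM0).
  have hN : (N <= #|Ed| ^ k)%N.
    apply: (leq_trans _ (bin_le_exp _ _)); rewrite -card_draws.
    apply: subset_leq_card; apply/fintype.subsetP => M; rewrite !inE => hM.
    have := (@pm_card T Ed ends hG M hM); rewrite hV => /eqP; rewrite eqn_pmul2l // eq_sym; exact: id.
  have hk : (0 < k)%N.
    case/card_gt0P: hE => x _.
    have := max_card (mem (ends x)); rewrite hG.2 hV.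
    by case: (k).
  set x := #|Ed|%:R / gamma.
  have hE' : 0 < #|Ed|%:R :> R by rewrite ltr0n.
  have hx : 0 < x by rewrite divr_gt0.
  have heb : eps / 2 * b = k%:R * ln x.
    rewrite /b hV natrM -/x; field; by rewrite gt_eqF.
  have hc : c = (x ^+ k)^-1.
    by rewrite /c heb expRN expRM_natl lnK // posrE.
  rewrite hc -mulr_natl.
  apply: (@le_trans _ _ (#|Ed|%:R ^+ k * (x ^+ k)^-1)).
    apply: ler_wpM2r; first by rewrite invr_ge0 exprn_ge0 // ltW.
    by rewrite -natrX ler_nat.
  rewrite /x expr_div_n invf_div mulrC divfK; last by rewrite expf_neq0 // gt_eqF.
  case: (k) hk => // k' _; rewrite exprS.
  apply: ler_piMr; first exact: ltW.
  by rewrite exprn_ile1 // ltW.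
Qed.
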